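(* Assume $\mathcal G$ is strongly connected. Then there exists a constant $c\in(0,1)$ such that if for each agent $i$ the triggering times are generated recursively along the solution of system (S) by $t^i_1=0$ and either $$t^i_{k+1}=\max\Big\{\tau\ge t^i_k:\ |q_i(t^i_k)-q_i(t)|\le c\,|q_i(t)|\ \ \forall t\in[t^i_k,\tau]\Big\}$$ or $$t^i_{k+1}=\max\Big\{\tau\ge t^i_k:\ \frac{|q_i(t^i_k)|}{1+c}\le|q_i(t)|\le\frac{|q_i(t^i_k)|}{1-c}\ \ \forall t\in[t^i_k,\tau]\Big\},$$ then system (S) reaches consensus.
   Context: Let $\mathcal G$ be a weighted directed graph on agents $v_1,\dots,v_m$ with weighted adjacency matrix $\mathcal A=(a_{ij})$, $a_{ij}\ge0$, $a_{ii}=0$, where $a_{ij}>0$ iff there is a link from $v_j$ to $v_i$. Let $D=\mathrm{diag}(\sum_j a_{1j},\dots,\sum_j a_{mj})$ and $L=D-\mathcal A$. $\mathcal G$ is strongly connected if there is a directed path between any two distinct agents. System (S): $\dot x_i(t)=-\sum_{j=1}^m L_{ij}x_j(t^i_{k_i(t)})$, $i=1,\dots,m$, where $0=t^i_1<t^i_2<\cdots$ are agent $i$'s triggering times and $k_i(t)=\max\{k:t^i_k\le t\}$. Define $q_i(t)=-\sum_jL_{ij}x_j(t)$. Consensus means $x_i(t)-x_j(t)\to0$ as $t\to\infty$ for all $i,j$. *)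

(* Defs.v *)
From Stdlib Require Import Reals Lra.
Open Scope R_scope.

(* Agents are indexed by 0, ..., m-1 (agent v_{i+1} of the paper is index i).
   The weighted adjacency matrix is a : nat -> nat -> R, a i j = a_{ij},
   meaningful for i, j < m. *)

Fixpoint rsum (n : nat) (f : nat -> R) : R :=
  match n with
  | O => 0
  | S n' => rsum n' f + f n'
  end.

Definition Lap (a : nat -> nat -> R) (m : nat) (i j : nat) : R :=
  (if Nat.eqb i j then rsum m (fun k => a i k) else 0) - a i j.

Definition q (a : nat -> nat -> R) (m : nat) (x : nat -> R -> R) (i : nat) (t : R) : R :=
  - rsum m (fun j => Lap a m i j * x j t).

(* There is a link from v_u to v_v iff a v u > 0.
   reach a m u v : there is a directed path from u to v. *)
Inductive reach (a : nat -> nat -> R) (m : nat) : nat -> nat -> Prop :=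
  | reach_edge : forall u v, (u < m)%nat -> (v < m)%nat -> a v u > 0 -> reach a m u v
  | reach_step : forall u w v, reach a m u w -> (v < m)%nat -> a v w > 0 -> reach a m u v.

Definition strongly_connected (a : nat -> nat -> R) (m : nat) : Prop :=
  forall i j, (i < m)%nat -> (j < m)%nat -> i <> j -> reach a m i j.

(* If that set is unbounded (cond holds on all of [tk, +oo)) the max is +oo,
   encoded as None (no further triggering). *)
Definition next_trigger (cond : R -> Prop) (tk : R) (nxt : option R) : Prop :=
  match nxt with
  | Some s =>
      tk <= s /\ (forall t, tk <= t <= s -> cond t) /\
      (forall tau, tk <= tau -> (forall t, tk <= t <= tau -> cond t) -> tau <= s)
  | None => forall t, tk <= t -> cond t
  end.

Definition cond1 (a : nat -> nat -> R) (m : nat) (x : nat -> R -> R) (c : R)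
    (i : nat) (s t : R) : Prop :=
  Rabs (q a m x i s - q a m x i t) <= c * Rabs (q a m x i t).

Definition cond2 (a : nat -> nat -> R) (m : nat) (x : nat -> R -> R) (c : R)
    (i : nat) (s t : R) : Prop :=
  Rabs (q a m x i s) / (1 + c) <= Rabs (q a m x i t) <= Rabs (q a m x i s) / (1 - c).

(* tt i k = Some t^i_{k+1} (paper indexes from 1), None = no (k+1)-th trigger.
   rule i = true : agent i uses the first rule, false : the second. *)
Definition triggers_generated (a : nat -> nat -> R) (m : nat) (x : nat -> R -> R)
    (c : R) (rule : nat -> bool) (tt : nat -> nat -> option R) : Prop :=
  forall i, (i < m)%nat ->
    tt i O = Some 0 /\
    (forall k, tt i k = None -> tt i (S k) = None) /\
    (forall k s, tt i k = Some s ->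
       next_trigger (fun t => if rule i then cond1 a m x c i s t else cond2 a m x c i s t)
                    s (tt i (S k))).

(* The triggering sequences are well defined on [0,+oo): they do not
   accumulate, so that k_i(t) = max{k : t^i_k <= t} exists for every t >= 0. *)
Definition non_zeno (m : nat) (tt : nat -> nat -> option R) : Prop :=
  forall i T, (i < m)%nat ->
    exists k, tt i k = None \/ exists s, tt i k = Some s /\ T < s.

(* x solves (S) on [0,+oo): x_i continuous, and between two consecutive
   triggering times of agent i,  x_i' = -sum_j L_ij x_j(t^i_k) = q_i(t^i_k). *)
Definition solves_S (a : nat -> nat -> R) (m : nat) (x : nat -> R -> R)
    (tt : nat -> nat -> option R) : Prop :=
  (forall i t, (i < m)%nat -> 0 <= t -> continuity_pt (x i) t) /\
  (forall i k s t, (i < m)%nat -> tt i k = Some s -> s < t ->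
     match tt i (S k) with Some s' => t < s' | None => True end ->
     derivable_pt_lim (x i) t (q a m x i s)).

Definition consensus (m : nat) (x : nat -> R -> R) : Prop :=
  forall i j, (i < m)%nat -> (j < m)%nat ->
    forall eps, eps > 0 -> exists T, forall t, t >= T -> Rabs (x i t - x j t) < eps.

(* Main.v *)
Require Import Defs.
From Stdlib Require Import Reals.
From Stdlib Require Import Lra Lia Ranalysis5 Classical.
From Coquelicot Require Import Coquelicot.
Open Scope R_scope.

Lemma rsum_ext n f g : (forall k, (k < n)%nat -> f k = g k) -> rsum n f = rsum n g.
Proof. induction n; simpl; intros; auto. rewrite IHn by (intros; apply H; lia). rewrite H by lia; auto. Qed.

Lemma rsum_plus n f g : rsum n (fun k => f k + g k) = rsum n f + rsum n g.
Proof. induction n; simpl; [lra|]. rewrite IHn; lra. Qed.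

Lemma rsum_scal n c f : rsum n (fun k => c * f k) = c * rsum n f.
Proof. induction n; simpl; [lra|]. rewrite IHn; lra. Qed.

Lemma rsum_opp n f : rsum n (fun k => - f k) = - rsum n f.
Proof. induction n; simpl; [lra|]. rewrite IHn; lra. Qed.

Lemma rsum_nonneg n f : (forall k, (k < n)%nat -> 0 <= f k) -> 0 <= rsum n f.
Proof. induction n; simpl; intros; [lra|]. assert (0 <= f n) by (apply H; lia).
 assert (0 <= rsum n f) by (apply IHn; intros; apply H; lia). lra. Qed.

Lemma rsum_le n f g : (forall k, (k < n)%nat -> f k <= g k) -> rsum n f <= rsum n g.
Proof. induction n; simpl; intros; [lra|]. assert (f n <= g n) by (apply H; lia).
 assert (rsum n f <= rsum n g) by (apply IHn; intros; apply H; lia). lra. Qed.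

Lemma rsum_ge_term n f w : (forall k, (k < n)%nat -> 0 <= f k) -> (w < n)%nat -> f w <= rsum n f.
Proof. induction n; simpl; intros; [lia|].
 assert (0 <= rsum n f) by (apply rsum_nonneg; intros; apply H; lia).
 destruct (Nat.eq_dec w n). subst; lra.
 assert (f w <= rsum n f) by (apply IHn; [intros; apply H; lia| lia]).
 assert (0 <= f n) by (apply H; lia). lra. Qed.

Lemma rsum_delta n i c : (i < n)%nat -> rsum n (fun j => (if Nat.eqb i j then c else 0)) = c.
Proof. induction n; simpl; intros; [lia|].
 destruct (Nat.eqb_spec i n).
 - subst. rewrite (rsum_ext n _ (fun _ => 0)). clear. induction n; simpl; lra.
   intros. destruct (Nat.eqb_spec n k); [lia|auto].
 - rewrite IHn by lia. lra. Qed.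

Definition Qf (a : nat -> nat -> R) (m : nat) (y : nat -> R -> R) (i : nat) (t : R) : R :=
  rsum m (fun k => a i k * (y k t - y i t)).

Lemma q_Qf a m x i t : (i < m)%nat -> q a m x i t = Qf a m x i t.
Proof. intros Hi. unfold q, Qf, Lap.
 rewrite (rsum_ext m (fun j => ((if Nat.eqb i j then rsum m (fun k => a i k) else 0) - a i j) * x j t)
   (fun j => (if Nat.eqb i j then rsum m (fun k => a i k) * x i t else 0) + (- (a i j * x j t)))).
 2:{ intros k Hk. cbv beta. destruct (Nat.eqb_spec i k); subst; ring. }
 rewrite rsum_plus, rsum_delta by auto. rewrite rsum_opp.
 rewrite (rsum_ext m (fun k => a i k * (x k t - x i t)) (fun k => a i k * x k t + (- (x i t * a i k)))).
 2:{ intros; ring. }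
 rewrite rsum_plus, rsum_opp, rsum_scal. change (rsum m (a i)) with (rsum m (fun k => a i k)). ring. Qed.

Lemma cont_rsum n (F : nat -> R -> R) t : (forall k, (k < n)%nat -> continuity_pt (F k) t) ->
  continuity_pt (fun u => rsum n (fun k => F k u)) t.
Proof. induction n; simpl; intros.
 - apply continuity_pt_const. intros a b; reflexivity.
 - apply (continuity_pt_plus (fun u => rsum n (fun k => F k u)) (F n)).
   apply IHn; intros; apply H; lia. apply H; lia. Qed.

Lemma cont_Qf a m y i t : (i < m)%nat -> (forall k, (k < m)%nat -> continuity_pt (y k) t) ->
  continuity_pt (Qf a m y i) t.
Proof. intros Hi H. unfold Qf. apply (cont_rsum m (fun k u => a i k * (y k u - y i u))).
 intros. apply (continuity_pt_mult (fun _ => a i k) (fun u => y k u - y i u)).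
 apply continuity_pt_const; intros p r; reflexivity.
 apply (continuity_pt_minus (y k) (y i)); auto. Qed.

Lemma cont_eps f x : continuity_pt f x -> forall e, 0 < e -> exists d, 0 < d /\
  forall u, Rabs (u - x) < d -> Rabs (f u - f x) < e.
Proof. intros H e He. destruct (H e He) as [d [Hd Hf]]. exists d; split; auto.
 intros u Hu. destruct (Req_dec u x). subst. rewrite Rminus_diag, Rabs_R0; auto.
 apply Hf. split. split; [exact I| auto]. exact Hu. Qed.

Lemma finite_pos n (f : nat -> R -> R) t : (forall k, (k<n)%nat -> continuity_pt (f k) t) ->
  (forall k, (k<n)%nat -> 0 < f k t) ->
  exists eta, 0 < eta /\ forall k u, (k<n)%nat -> Rabs (u - t) < eta -> 0 < f k u.
Proof. induction n; intros Hc Hp.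
 - exists 1; split; [lra|]. intros; lia.
 - destruct IHn as [e1 [He1 H1]]. intros; apply Hc; lia. intros; apply Hp; lia.
   assert (Hn : 0 < f n t) by (apply Hp; lia).
   destruct (cont_eps (f n) t (Hc n ltac:(lia)) (f n t) Hn) as [e2 [He2 H2]].
   exists (Rmin e1 e2); split. apply Rmin_pos; auto.
   intros k u Hk Hu. destruct (Nat.eq_dec k n).
   + subst. assert (Rabs (u - t) < e2) by (pose proof (Rmin_r e1 e2); lra).
     specialize (H2 u H). apply Rabs_def2 in H2. lra.
   + apply H1. lia. pose proof (Rmin_l e1 e2); lra. Qed.

Lemma barrier (n:nat) (f : nat -> R -> R) (a0 : R) :
 (forall j t, (j<n)%nat -> a0 <= t -> continuity_pt (f j) t) ->
 (forall j, (j<n)%nat -> 0 < f j a0) ->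
 (forall j t, (j<n)%nat -> a0 < t -> f j t = 0 ->
    (forall k s, (k<n)%nat -> a0 <= s < t -> 0 < f k s) ->
    (forall k, (k<n)%nat -> 0 <= f k t) ->
    exists d, 0 < d /\ exists df : R -> R, forall u, t - d < u < t ->
       derivable_pt_lim (f j) u (df u) /\ 0 <= df u) ->
 forall j t, (j<n)%nat -> a0 <= t -> 0 < f j t.
Proof.
 intros Hc H0 Hloc j1 t1 Hj1 Ht1.
 apply Rnot_le_lt; intro Hbad.
 set (E := fun s => a0 <= s <= t1 /\ forall k r, (k<n)%nat -> a0 <= r <= s -> 0 < f k r).
 assert (HEa : E a0). { split. lra. intros k r Hk Hr. replace r with a0 by lra. auto. }
 assert (HEb : bound E). { exists t1. intros s [Hs _]. lra. }
 destruct (completeness E HEb (ex_intro _ a0 HEa)) as [ts [Hub Hlub]].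
 assert (Hts1 : a0 <= ts) by (apply Hub; auto).
 assert (Hts2 : ts <= t1). { apply Hlub. intros s [Hs _]. lra. }
 assert (F1 : forall k r, (k<n)%nat -> a0 <= r < ts -> 0 < f k r).
 { intros k r Hk Hr. destruct (classic (exists e, E e /\ r < e)) as [[e [[He1 He2] Hre]]|Hno].
   - apply He2; auto; lra.
   - exfalso. assert (ts <= r). { apply Hlub. intros e He. apply Rnot_lt_le. intro. apply Hno. eauto. }
     lra. }
 assert (F2 : forall k, (k<n)%nat -> 0 <= f k ts).
 { intros k Hk. destruct (Req_dec ts a0). subst. left; auto.
   apply Rnot_lt_le. intro Hneg.
   destruct (cont_eps (f k) ts (Hc k ts Hk Hts1) (- f k ts) ltac:(lra)) as [d [Hd Hf]].
   set (u := ts - Rmin d (ts - a0) / 2).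
   assert (Hm1 := Rmin_l d (ts - a0)). assert (Hm2 := Rmin_r d (ts - a0)).
   assert (Hmp : 0 < Rmin d (ts - a0)) by (apply Rmin_pos; lra).
   assert (Hu : 0 < f k u) by (apply F1; auto; unfold u; lra).
   assert (Hud : Rabs (u - ts) < d). { unfold u. rewrite Rabs_left by lra. lra. }
   specialize (Hf u Hud). apply Rabs_def2 in Hf. lra. }
 destruct (classic (exists j, (j<n)%nat /\ f j ts <= 0)) as [[j [Hj Hfj]]|Hall].
 - assert (Hz : f j ts = 0) by (specialize (F2 j Hj); lra).
   assert (Hgt : a0 < ts). { destruct (Req_dec ts a0); [|lra]. subst. specialize (H0 j Hj). lra. }
   destruct (Hloc j ts Hj Hgt Hz F1 F2) as [d [Hd [df Hdf]]].
   set (u := ts - Rmin d (ts - a0) / 2).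
   assert (Hm1 := Rmin_l d (ts - a0)). assert (Hm2 := Rmin_r d (ts - a0)).
   assert (0 < Rmin d (ts - a0)) by (apply Rmin_pos; lra).
   assert (Hu : 0 < f j u) by (apply F1; auto; unfold u; lra).
   assert (Hut : u < ts) by (unfold u; lra).
   set (df2 := fun x => match Rlt_dec (ts - d) x, Rlt_dec x ts with left _, left _ => df x | _, _ => 0 end).
   pose proof (MVT_gen (f j) u ts df2) as HM. simpl in HM.
   rewrite Rmin_left, Rmax_right in HM by lra.
   destruct HM as [c [Hc1 Hc2]].
   + intros x Hx. apply is_derive_Reals. unfold df2.
     destruct (Rlt_dec (ts - d) x); [|unfold u in *; lra].
     destruct (Rlt_dec x ts); [|lra]. apply Hdf. lra.
   + intros x Hx. apply Hc; auto. unfold u in *; lra.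
   + assert (0 <= df2 c). { unfold df2. destruct (Rlt_dec (ts - d) c); [|lra].
       destruct (Rlt_dec c ts); [|lra]. apply Hdf. lra. }
     assert (0 <= df2 c * (ts - u)) by (apply Rmult_le_pos; lra). lra.
 - assert (Hpos : forall k, (k<n)%nat -> 0 < f k ts).
   { intros k Hk. apply Rnot_le_lt. intro. apply Hall. eauto. }
   destruct (Req_dec ts t1) as [Heq|Hne].
   { subst. specialize (Hpos j1 Hj1). lra. }
   destruct (finite_pos n f ts (fun k Hk => Hc k ts Hk Hts1) Hpos) as [eta [Heta Hf]].
   set (e := Rmin (ts + eta/2) t1).
   assert (He1 := Rmin_l (ts + eta/2) t1). assert (He2 := Rmin_r (ts + eta/2) t1).
   fold e in He1, He2. assert (He3 : ts < e). { unfold e. apply Rmin_glb_lt; lra. }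
   assert (HE : E e).
   { split. lra. intros k r Hk Hr. destruct (Rlt_dec r ts). apply F1; auto; lra.
     apply Hf; auto. rewrite Rabs_right by lra. lra. }
   specialize (Hub e HE). lra.
Qed.

Definition REL (p r : R) : Prop := (0 <= r -> r/2 <= p <= 3*r/2) /\ (r <= 0 -> 3*r/2 <= p <= r/2).

Definition good (a : nat -> nat -> R) (m : nat) (y : nat -> R -> R) : Prop :=
  (forall k t, (k<m)%nat -> 0 <= t -> continuity_pt (y k) t) /\
  (forall j t, (j<m)%nat -> 0 < t -> exists s p, 0 <= s < t /\
     forall u, s < u < t -> derivable_pt_lim (y j) u p /\ REL p (Qf a m y j u)).

Lemma Qf_neg a m y j u : Qf a m (fun k t => - y k t) j u = - Qf a m y j u.
Proof. unfold Qf. rewrite <- rsum_opp. apply rsum_ext. intros; ring. Qed.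

Lemma good_neg a m y : good a m y -> good a m (fun k t => - y k t).
Proof. intros [Hc Hd]. split.
 - intros. apply (continuity_pt_opp (y k)); auto.
 - intros j t Hj Ht. destruct (Hd j t Hj Ht) as [s [p [Hs Hu]]].
   exists s, (-p). split; auto. intros u Hu'. destruct (Hu u Hu') as [H1 [H2 H3]].
   split. apply is_derive_Reals. apply (is_derive_opp (y j)). apply is_derive_Reals; auto.
   rewrite Qf_neg. split; intros; [assert (H4 := H3 ltac:(lra))|assert (H4 := H2 ltac:(lra))]; lra. Qed.

Lemma dcont g t l : derivable_pt_lim g t l -> continuity_pt g t.
Proof. intros H. apply (derivable_continuous_pt g t (exist _ l H)). Qed.

Lemma cont_affine_minus (y : R -> R) (al be t : R) : continuity_pt y t ->
  continuity_pt (fun s => al + be * s - y s) t.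
Proof. intros H. apply (continuity_pt_minus (fun s => al + be * s) y); auto.
 apply dcont with be. apply is_derive_Reals. auto_derive; auto; ring. Qed.

Lemma Qf_nonpos a m y j t : (forall k, (k<m)%nat -> 0 <= a j k) ->
  (forall k, (k<m)%nat -> y k t <= y j t) -> Qf a m y j t <= 0.
Proof. intros Ha Hy. unfold Qf.
 assert (0 <= rsum m (fun k => - (a j k * (y k t - y j t)))).
 { apply rsum_nonneg. intros k Hk. specialize (Ha k Hk); specialize (Hy k Hk).
   assert (0 <= a j k * (y j t - y k t)) by (apply Rmult_le_pos; lra). lra. }
 rewrite rsum_opp in H. lra. Qed.

Lemma invariance a m y t0 M : good a m y ->
  (forall i j, (i<m)%nat -> (j<m)%nat -> 0 <= a i j) -> 0 <= t0 ->
  (forall k, (k<m)%nat -> y k t0 <= M) ->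
  forall k t, (k<m)%nat -> t0 <= t -> y k t <= M.
Proof.
 intros [Hc Hd] Ha Ht0 HM k t Hk Ht. apply Rnot_lt_le; intro Hbad.
 set (eps := (y k t - M) / (2 * (1 + t - t0))).
 assert (Heps : 0 < eps). { unfold eps. apply Rdiv_lt_0_compat; lra. }
 assert (Hkey : 0 < M + eps * (1 + t - t0) - y k t).
 { apply (barrier m (fun j s => M + eps * (1 + s - t0) - y j s) t0); auto.
   - intros j s Hj Hs. apply (continuity_pt_ext (fun s => (M + eps*(1-t0)) + eps * s - y j s)).
     intros; ring. apply cont_affine_minus. apply Hc; auto; lra.
   - intros j Hj. specialize (HM j Hj). nra.
   - intros j ts Hj Hts Hz F1 F2.
     assert (HQ : Qf a m y j ts <= 0).
     { apply Qf_nonpos. intros; apply Ha; auto. intros k0 Hk0. specialize (F2 k0 Hk0). lra. }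
     assert (HcQ : continuity_pt (Qf a m y j) ts).
     { apply cont_Qf; auto. intros; apply Hc; auto; lra. }
     destruct (cont_eps _ _ HcQ (eps/2) ltac:(lra)) as [d1 [Hd1 HQd]].
     destruct (Hd j ts Hj ltac:(lra)) as [s [p [Hs Hseg]]].
     exists (Rmin d1 (ts - s)). split. apply Rmin_pos; lra.
     exists (fun _ => eps - p). intros u Hu.
     assert (Hm1 := Rmin_l d1 (ts - s)). assert (Hm2 := Rmin_r d1 (ts - s)).
     destruct (Hseg u ltac:(lra)) as [Hder [HR1 HR2]]. split.
     + apply is_derive_Reals. apply (is_derive_minus (fun s => M + eps*(1+s-t0)) (y j) u eps p).
       auto_derive; auto; ring. apply is_derive_Reals; auto.
     + assert (Hab : Rabs (u - ts) < d1). { rewrite Rabs_left by lra. lra. }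
       specialize (HQd u Hab). apply Rabs_def2 in HQd.
       destruct (Rle_dec 0 (Qf a m y j u)); [specialize (HR1 r)|specialize (HR2 ltac:(lra))]; lra. }
 assert (eps * (1 + t - t0) = (y k t - M) / 2) by (unfold eps; field; lra).
 lra.
Qed.

Lemma compare (z b b' : R -> R) t0 A : 0 < A ->
 (forall t, t0 <= t -> continuity_pt z t) -> (forall u, is_derive b u (b' u)) -> b t0 <= z t0 ->
 (forall t, t0 < t -> exists d, 0 < d /\ exists p, forall u, t - d < u < t ->
     derivable_pt_lim z u p /\ b' u - A * (z u - b u) <= p) ->
 forall t, t0 <= t -> b t <= z t.
Proof.
 intros HA Hc Hb Hb0 Hloc t Ht. apply Rnot_lt_le; intro Hbad.
 set (eps := (b t - z t)/2).
 assert (Hcb : forall s, continuity_pt b s).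
 { intros s. apply dcont with (b' s). apply is_derive_Reals; auto. }
 assert (Hkey : 0 < z t - b t + eps).
 { apply (barrier 1 (fun _ s => z s - b s + eps) t0 ) with (j := O); auto.
   - intros j s Hj Hs. apply (continuity_pt_plus (fun s => z s - b s) (fun _ => eps)).
     apply (continuity_pt_minus z b); auto. apply continuity_pt_const; intros x y; reflexivity.
   - intros; unfold eps; lra.
   - intros j ts Hj Hts Hz F1 F2.
     assert (Hcf : continuity_pt (fun s => z s - b s + eps) ts).
     { apply (continuity_pt_plus (fun s => z s - b s) (fun _ => eps)).
       apply (continuity_pt_minus z b); auto. apply Hc; lra. apply continuity_pt_const; intros x y; reflexivity. }
     destruct (cont_eps _ _ Hcf eps ltac:(unfold eps; lra)) as [d1 [Hd1 Hf1]].
     destruct (Hloc ts Hts) as [d [Hd [p Hp]]].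
     exists (Rmin d d1). split. apply Rmin_pos; lra.
     exists (fun u => p - b' u). intros u Hu.
     assert (Hm1 := Rmin_l d d1). assert (Hm2 := Rmin_r d d1).
     destruct (Hp u ltac:(lra)) as [Hder Hge]. split.
     + apply is_derive_Reals. replace (p - b' u) with (p - b' u + 0) by ring. apply (is_derive_plus (fun s => z s - b s) (fun _ => eps) u (p - b' u) 0) .
       apply (is_derive_minus z b). apply is_derive_Reals; auto. auto.
       auto_derive; auto.
     + assert (Hab : Rabs (u - ts) < d1). { rewrite Rabs_left by lra. lra. }
       specialize (Hf1 u Hab). rewrite Hz in Hf1. apply Rabs_def2 in Hf1.
       assert (0 <= A * (eps - (z u - b u + eps))) by (apply Rmult_le_pos; lra). nra. }
 unfold eps in Hkey. lra.
Qed.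

Lemma Qf_decomp a m y v u M : Qf a m y v u =
  rsum m (fun k => a v k) * (M - y v u) - rsum m (fun k => a v k * (M - y k u)).
Proof. unfold Qf.
 rewrite (rsum_ext m (fun k => a v k * (y k u - y v u))
   (fun k => ((M - y v u) * a v k) + - (a v k * (M - y k u)))) by (intros; ring).
 rewrite rsum_plus, rsum_opp, rsum_scal. change (rsum m (a v)) with (rsum m (fun k => a v k)). ring. Qed.

Definition NN (a : nat -> nat -> R) m := forall i j, (i<m)%nat -> (j<m)%nat -> 0 <= a i j.

Lemma drv a m y t0 M v t : good a m y -> NN a m -> 0 <= t0 -> (forall i, (i<m)%nat -> y i t0 <= M) ->
  (v < m)%nat -> t0 < t ->
  exists d, 0 < d /\ exists p, forall u, t - d < u < t -> t0 < u /\
    derivable_pt_lim (fun s => M - y v s) u p /\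
    (1/2) * rsum m (fun k => a v k * (M - y k u)) - (3/2) * rsum m (fun k => a v k) * (M - y v u) <= p.
Proof.
 intros Hg Hnn Ht0 HM Hv Ht.
 pose proof (invariance a m y t0 M Hg Hnn Ht0 HM) as Hinv.
 destruct Hg as [Hc Hd].
 destruct (Hd v t Hv ltac:(lra)) as [s [p0 [Hs Hseg]]].
 exists (Rmin (t - s) (t - t0)). split. apply Rmin_pos; lra.
 exists (- p0). intros u Hu.
 assert (Hm1 := Rmin_l (t - s) (t - t0)). assert (Hm2 := Rmin_r (t - s) (t - t0)).
 destruct (Hseg u ltac:(lra)) as [Hder [HR1 HR2]].
 split; [lra|]. split.
 - apply is_derive_Reals. replace (- p0) with (0 - p0) by ring. apply (is_derive_minus (fun _ => M) (y v) u 0 p0 ) .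
   auto_derive; auto. apply is_derive_Reals; auto.
 - rewrite (Qf_decomp a m y v u M) in HR1, HR2.
   set (Z := M - y v u) in *. set (Sg := rsum m (fun k => a v k * (M - y k u))) in *.
   set (Dg := rsum m (fun k => a v k)) in *.
   assert (HZ : 0 <= Z) by (unfold Z; assert (y v u <= M) by (apply Hinv; auto; lra); lra).
   assert (HS : 0 <= Sg). { unfold Sg; apply rsum_nonneg; intros k Hk. apply Rmult_le_pos. apply Hnn; auto.
     assert (y k u <= M) by (apply Hinv; auto; lra); lra. }
   assert (HD : 0 <= Dg) by (unfold Dg; apply rsum_nonneg; intros; apply Hnn; auto).
   assert (0 <= Dg * Z) by (apply Rmult_le_pos; auto).
   destruct (Rle_dec 0 (Dg * Z - Sg)); [specialize (HR1 r)|specialize (HR2 ltac:(lra))]; lra.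
Qed.

Definition Acst a m := 3/2 * (1 + rsum m (fun v => rsum m (fun k => a v k))).

Lemma Acst_pos a m : NN a m -> 0 < Acst a m.
Proof. intros H. unfold Acst. assert (0 <= rsum m (fun v => rsum m (fun k => a v k))).
 apply rsum_nonneg; intros; apply rsum_nonneg; intros; apply H; auto. lra. Qed.

Lemma Acst_ge a m v : NN a m -> (v<m)%nat -> 3/2 * rsum m (fun k => a v k) <= Acst a m.
Proof. intros H Hv. unfold Acst.
 assert (rsum m (fun k => a v k) <= rsum m (fun v => rsum m (fun k => a v k))).
 apply (rsum_ge_term m (fun v => rsum m (fun k => a v k))). intros; apply rsum_nonneg; intros; apply H; auto. auto.
 lra. Qed.

Definition Bnd a m r v g k := forall y t0 M, good a m y -> 0 <= t0 -> (forall i, (i<m)%nat -> y i t0 <= M) ->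
  forall t, t0 <= t -> g * (M - y r t0) * (t - t0)^k * exp (- Acst a m * (t - t0)) <= M - y v t.

Lemma cont_cminus (y : R -> R) M t : continuity_pt y t -> continuity_pt (fun s => M - y s) t.
Proof. intros. apply (continuity_pt_minus (fun _ => M) y); auto. apply continuity_pt_const; intros p q; reflexivity. Qed.

Lemma bnd_base a m r : NN a m -> (r<m)%nat -> Bnd a m r r 1 0.
Proof.
 intros Hnn Hr y t0 M Hg Ht0 HM t Ht. simpl pow.
 set (A := Acst a m). assert (HA : 0 < A) by (apply Acst_pos; auto).
 assert (HAg : 3/2 * rsum m (fun k => a r k) <= A) by (apply Acst_ge; auto).
 pose proof (invariance a m y t0 M Hg Hnn Ht0 HM) as Hinv.
 assert (H := compare (fun s => M - y r s) (fun s => (M - y r t0) * exp (- A * (s - t0)))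
   (fun s => - A * ((M - y r t0) * exp (- A * (s - t0)))) t0 A HA).
 replace (1 * (M - y r t0) * 1) with (M - y r t0) by ring.
 apply H; auto.
 - intros s Hs. apply cont_cminus. apply (proj1 Hg); auto; lra.
 - intros u. auto_derive; [exact I|]. unfold Rminus. ring.
 - rewrite Rminus_diag, Rmult_0_r, exp_0. lra.
 - intros ts Hts. destruct (drv a m y t0 M r ts Hg Hnn Ht0 HM Hr Hts) as [d [Hd [p Hp]]].
   exists d; split; auto. exists p. intros u Hu. destruct (Hp u Hu) as [Hu0 [Hder Hge]].
   split; auto.
   assert (HS : 0 <= rsum m (fun k => a r k * (M - y k u))).
   { apply rsum_nonneg; intros k Hk. apply Rmult_le_pos. apply Hnn; auto.
     assert (y k u <= M) by (apply Hinv; auto; lra); lra. }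
   assert (HZ : 0 <= M - y r u) by (assert (y r u <= M) by (apply Hinv; auto; lra); lra).
   assert (3/2 * rsum m (fun k => a r k) * (M - y r u) <= A * (M - y r u)) by (apply Rmult_le_compat_r; auto).
   lra.
Qed.

Lemma bnd_step a m r w v g k : NN a m -> Bnd a m r w g k -> (w<m)%nat -> (v<m)%nat -> 0 < a v w ->
  Bnd a m r v (g * a v w / (2 * INR (S k))) (S k).
Proof.
 intros Hnn Hb Hw Hv Havw y t0 M Hg Ht0 HM t Ht.
 set (A := Acst a m). assert (HA : 0 < A) by (apply Acst_pos; auto).
 assert (HAg : 3/2 * rsum m (fun k => a v k) <= A) by (apply Acst_ge; auto).
 pose proof (invariance a m y t0 M Hg Hnn Ht0 HM) as Hinv.
 set (g' := g * a v w / (2 * INR (S k))). set (Z := M - y r t0).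
 assert (HSk : 0 < INR (S k)) by (apply lt_0_INR; lia).
 assert (Hg' : g' * INR (S k) = g * a v w / 2) by (unfold g'; field; lra).
 assert (H := compare (fun s => M - y v s) (fun s => g' * Z * (s - t0)^(S k) * exp (- A * (s - t0)))
   (fun s => g' * Z * (INR (S k) * (s - t0)^k - A * (s - t0)^(S k)) * exp (- A * (s - t0))) t0 A HA).
 apply H; auto.
 - intros s Hs. apply cont_cminus. apply (proj1 Hg); auto; lra.
 - intros u. auto_derive; auto. change (match k with O => 1 | S _ => INR k + 1 end) with (INR (S k)).
   simpl pow. unfold Rminus. ring.
 - rewrite Rminus_diag, pow_i by lia. assert (y v t0 <= M) by (apply HM; auto). lra.
 - intros ts Hts. destruct (drv a m y t0 M v ts Hg Hnn Ht0 HM Hv Hts) as [d [Hd [p Hp]]].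
   exists d; split; auto. exists p. intros u Hu. destruct (Hp u Hu) as [Hu0 [Hder Hge]].
   split; auto.
   assert (HS : a v w * (M - y w u) <= rsum m (fun k => a v k * (M - y k u))).
   { apply (rsum_ge_term m (fun k => a v k * (M - y k u))); auto. intros k0 Hk. apply Rmult_le_pos. apply Hnn; auto.
     assert (y k0 u <= M) by (apply Hinv; auto; lra); lra. }
   assert (HZ : 0 <= M - y v u) by (assert (y v u <= M) by (apply Hinv; auto; lra); lra).
   assert (3/2 * rsum m (fun k => a v k) * (M - y v u) <= A * (M - y v u)) by (apply Rmult_le_compat_r; auto).
   assert (Hw' := Hb y t0 M Hg Ht0 HM u ltac:(lra)). fold A Z in Hw'.
   assert (a v w * (g * Z * (u - t0) ^ k * exp (- A * (u - t0))) <= a v w * (M - y w u))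
     by (apply Rmult_le_compat_l; lra).
   assert (E : g' * Z * (INR (S k) * (u - t0) ^ k - A * (u - t0) ^ S k) * exp (- A * (u - t0)) -
      A * (M - y v u - g' * Z * (u - t0) ^ S k * exp (- A * (u - t0)))
      = (g' * INR (S k)) * Z * (u - t0) ^ k * exp (- A * (u - t0)) - A * (M - y v u)) by ring.
   rewrite E, Hg'. lra.
Qed.

Lemma reach_lt a m u v : reach a m u v -> (v < m)%nat.
Proof. intros H; destruct H; auto. Qed.

Lemma bnd_reach a m : NN a m -> forall u v, reach a m u v -> exists g k, 0 < g /\ Bnd a m u v g k.
Proof. intros Hnn u v H. induction H.
 - exists (1 * a v u / (2 * INR (S 0))), (S 0). split.
   simpl. lra. apply bnd_step with (w := u); auto. apply bnd_base; auto.
 - destruct IHreach as [g [k [Hg Hb]]]. exists (g * a v w / (2 * INR (S k))), (S k). split.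
   assert (0 < INR (S k)) by (apply lt_0_INR; lia). apply Rdiv_lt_0_compat. nra. lra.
   apply bnd_step with (w := w); auto. eapply reach_lt; eauto. Qed.

Definition PP a m v r := forall y t0 M, good a m y -> 0 <= t0 -> (forall i, (i<m)%nat -> y i t0 <= M) ->
  r * (M - y O t0) <= M - y v (t0 + 1).

Lemma PP_of_bnd a m v g k : 0 < g -> Bnd a m O v g k -> PP a m v (g * exp (- Acst a m)).
Proof. intros Hg Hb y t0 M Hgood Ht0 HM. specialize (Hb y t0 M Hgood Ht0 HM (t0 + 1) ltac:(lra)).
 replace (t0 + 1 - t0) with 1 in Hb by ring. rewrite pow1, Rmult_1_r, Rmult_1_r in Hb. lra. Qed.

Lemma uniform a m : NN a m -> (0 < m)%nat -> strongly_connected a m ->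
  exists r, 0 < r <= 1 /\ forall v, (v < m)%nat -> PP a m v r.
Proof.
 intros Hnn Hm Hsc.
 assert (Hv : forall v, (v<m)%nat -> exists r, 0 < r /\ PP a m v r).
 { intros v Hvm. destruct (Nat.eq_dec v O).
   - subst. exists (1 * exp (- Acst a m)). split. rewrite Rmult_1_l; apply exp_pos.
     apply PP_of_bnd with 0%nat. lra. apply bnd_base; auto.
   - destruct (bnd_reach a m Hnn O v (Hsc O v Hm Hvm (not_eq_sym n))) as [g [k [Hg Hb]]].
     exists (g * exp (- Acst a m)). split. apply Rmult_lt_0_compat; auto; apply exp_pos.
     apply PP_of_bnd with k; auto. }
 assert (Hmono : forall v r r', PP a m v r -> 0 < r' <= r -> PP a m v r').
 { intros v r r' H Hr y t0 M Hg Ht0 HM. specialize (H y t0 M Hg Ht0 HM).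
   assert (0 <= M - y O t0) by (specialize (HM O Hm); lra).
   assert (r' * (M - y O t0) <= r * (M - y O t0)) by (apply Rmult_le_compat_r; lra). lra. }
 assert (forall n, (n <= m)%nat -> exists r, 0 < r <= 1 /\ forall v, (v < n)%nat -> PP a m v r).
 { induction n; intros Hn.
   - exists 1. split. lra. intros; lia.
   - destruct (IHn ltac:(lia)) as [r1 [Hr1 H1]]. destruct (Hv n ltac:(lia)) as [r2 [Hr2 H2]].
     exists (Rmin r1 r2). assert (Hm1 := Rmin_l r1 r2). assert (Hm2 := Rmin_r r1 r2).
     assert (0 < Rmin r1 r2) by (apply Rmin_pos; lra). split. lra.
     intros v Hvn. destruct (Nat.eq_dec v n).
     + subst. apply Hmono with r2; auto; lra.
     + apply Hmono with r1; [apply H1; lia| lra]. }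
 apply (H m). lia. Qed.

Fixpoint mx (n : nat) (f : nat -> R) : R :=
  match n with O => f O | S n' => Rmax (mx n' f) (f n') end.

Lemma mx_ge n f k : (k < n)%nat -> f k <= mx n f.
Proof. induction n; intros Hk; simpl; [lia|]. destruct (Nat.eq_dec k n).
 subst; apply Rmax_r. eapply Rle_trans; [apply IHn; lia| apply Rmax_l]. Qed.

Lemma mx_le n f B : (0 < n)%nat -> (forall k, (k<n)%nat -> f k <= B) -> mx n f <= B.
Proof. induction n; intros Hn H; simpl; [lia|]. destruct n.
 - simpl. apply Rmax_lub; apply H; lia.
 - apply Rmax_lub. apply IHn; [lia| intros; apply H; lia]. apply H; lia. Qed.

Definition mn n f := - mx n (fun k => - f k).

Lemma mn_le n f k : (k < n)%nat -> mn n f <= f k.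
Proof. intros. unfold mn. assert (- f k <= mx n (fun k => - f k)) by (apply (mx_ge n (fun k => - f k)); auto). lra. Qed.

Lemma mn_ge n f B : (0 < n)%nat -> (forall k, (k<n)%nat -> B <= f k) -> B <= mn n f.
Proof. intros Hn H. unfold mn. assert (mx n (fun k => - f k) <= - B).
 apply mx_le; auto. intros k Hk; specialize (H k Hk); lra. lra. Qed.

Definition Dm m (x : nat -> R -> R) t := mx m (fun k => x k t) - mn m (fun k => x k t).

Lemma Dm_mono a m x t0 t : NN a m -> (0<m)%nat -> good a m x -> 0 <= t0 -> t0 <= t -> Dm m x t <= Dm m x t0.
Proof. intros Hnn Hm Hg Ht0 Ht. unfold Dm.
 set (M0 := mx m (fun k => x k t0)). set (m0 := mn m (fun k => x k t0)).
 assert (H1 := invariance a m x t0 M0 Hg Hnn Ht0 (fun i Hi => mx_ge m (fun k => x k t0) i Hi)).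
 assert (H2 := invariance a m (fun k t => - x k t) t0 (- m0) (good_neg a m x Hg) Hnn Ht0
   (fun i Hi => Ropp_le_contravar _ _ (mn_le m (fun k => x k t0) i Hi))).
 assert (mx m (fun k => x k t) <= M0) by (apply mx_le; auto; intros; apply H1; auto).
 assert (m0 <= mn m (fun k => x k t)) by (apply mn_ge; auto; intros k Hk; specialize (H2 k t Hk Ht); lra).
 lra. Qed.

Lemma contraction a m x r t0 : NN a m -> (0<m)%nat -> good a m x -> 0 <= t0 -> 0 < r <= 1 ->
  (forall v, (v<m)%nat -> PP a m v r) -> Dm m x (t0 + 1) <= (1 - r/2) * Dm m x t0.
Proof. intros Hnn Hm Hg Ht0 Hr HP. unfold Dm.
 set (M0 := mx m (fun k => x k t0)). set (m0 := mn m (fun k => x k t0)).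
 assert (HM0 : forall i, (i<m)%nat -> x i t0 <= M0) by (intros; apply (mx_ge m (fun k => x k t0)); auto).
 assert (Hm0 : forall i, (i<m)%nat -> m0 <= x i t0) by (intros; apply (mn_le m (fun k => x k t0)); auto).
 assert (H1 := invariance a m x t0 M0 Hg Hnn Ht0 HM0).
 assert (HMn : forall i, (i<m)%nat -> - x i t0 <= - m0) by (intros i Hi; specialize (Hm0 i Hi); lra).
 assert (H2 := invariance a m (fun k t => - x k t) t0 (- m0) (good_neg a m x Hg) Hnn Ht0 HMn).
 assert (Hup : mx m (fun k => x k (t0+1)) <= M0) by (apply mx_le; auto; intros; apply H1; auto; lra).
 assert (Hlo : m0 <= mn m (fun k => x k (t0+1))) by (apply mn_ge; auto; intros k Hk; specialize (H2 k (t0+1) Hk ltac:(lra)); simpl in H2; lra).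
 assert (Hx0u := HM0 O Hm). assert (Hx0l := Hm0 O Hm).
 destruct (Rle_dec (x O t0) ((M0 + m0)/2)).
 - assert (Hb : forall v, (v<m)%nat -> x v (t0+1) <= M0 - r * (M0 - m0)/2).
   { intros v Hv. specialize (HP v Hv x t0 M0 Hg Ht0 HM0).
     assert (r * ((M0 - m0)/2) <= r * (M0 - x O t0)) by (apply Rmult_le_compat_l; lra). lra. }
   assert (mx m (fun k => x k (t0+1)) <= M0 - r * (M0 - m0)/2) by (apply mx_le; auto).
   lra.
 - assert (Hb : forall v, (v<m)%nat -> m0 + r * (M0 - m0)/2 <= x v (t0+1)).
   { intros v Hv. specialize (HP v Hv (fun k t => - x k t) t0 (- m0) (good_neg a m x Hg) Ht0 HMn).
     simpl in HP.
     assert (r * ((M0 - m0)/2) <= r * (- m0 - - x O t0)) by (apply Rmult_le_compat_l; lra). lra. }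
   assert (m0 + r * (M0 - m0)/2 <= mn m (fun k => x k (t0+1))) by (apply mn_ge; auto).
   lra.
Qed.

Lemma consensus_of_good a m x : NN a m -> strongly_connected a m -> good a m x -> consensus m x.
Proof.
 intros Hnn Hsc Hg i j Hi Hj eps Heps.
 assert (Hm : (0 < m)%nat) by lia.
 destruct (uniform a m Hnn Hm Hsc) as [r [Hr HP]].
 set (qq := 1 - r/2).
 assert (Hind : forall n, Dm m x (INR n) <= qq ^ n * Dm m x 0).
 { induction n. simpl. lra. rewrite S_INR. simpl pow.
 assert (Hn0 : 0 <= INR n) by apply pos_INR.
   assert (Hc := contraction a m x r (INR n) Hnn Hm Hg Hn0 Hr HP). fold qq in Hc.
   assert (0 <= qq) by (unfold qq; lra). 
   assert (qq * Dm m x (INR n) <= qq * (qq ^ n * Dm m x 0)) by (apply Rmult_le_compat_l; auto). lra. }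
 assert (HD0 : 0 <= Dm m x 0).
 { unfold Dm. assert (H1 := mx_ge m (fun k => x k 0) O Hm). assert (H2 := mn_le m (fun k => x k 0) O Hm). lra. }
 destruct (pow_lt_1_zero qq ltac:(unfold qq; rewrite Rabs_right; lra) (eps / (Dm m x 0 + 1))
   ltac:(apply Rdiv_lt_0_compat; lra)) as [N HN].
 exists (INR N). intros t Ht.
 assert (HN0 := HN N (le_n N)). rewrite Rabs_right in HN0 by (apply Rle_ge, pow_le; unfold qq; lra).
 assert (Hpos := pos_INR N).
 assert (Hmono := Dm_mono a m x (INR N) t Hnn Hm Hg Hpos ltac:(lra)).
 assert (HqN := Hind N).
 assert (qq ^ N * Dm m x 0 < eps).
 { apply Rmult_lt_compat_r with (r := Dm m x 0 + 1) in HN0; [|lra].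
   replace (eps / (Dm m x 0 + 1) * (Dm m x 0 + 1)) with eps in HN0 by (field; lra).
   assert (0 <= qq ^ N) by (apply pow_le; unfold qq; lra). nra. }
 assert (Hxi := mx_ge m (fun k => x k t) i Hi). assert (Hxj := mx_ge m (fun k => x k t) j Hj).
 assert (Hyi := mn_le m (fun k => x k t) i Hi). assert (Hyj := mn_le m (fun k => x k t) j Hj).
 unfold Dm in *. simpl in *. apply Rabs_def1; lra.
Qed.

Lemma rel_cond1 P U : Rabs (P - U) <= 1/2 * Rabs U -> REL P U.
Proof. unfold REL, Rabs. destruct (Rcase_abs (P - U)); destruct (Rcase_abs U); intros; split; intros; lra. Qed.

Lemma rel_cond2 (g : R -> R) s u : s < u -> (forall z, s <= z <= u -> continuity_pt g z) ->
  (forall z, s <= z <= u -> Rabs (g s) / (1 + 1/2) <= Rabs (g z) <= Rabs (g s) / (1 - 1/2)) ->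
  REL (g s) (g u).
Proof.
 intros Hsu Hc Hcd.
 assert (Hcd' : forall z, s <= z <= u -> 2/3 * Rabs (g s) <= Rabs (g z) <= 2 * Rabs (g s)).
 { intros z Hz. specialize (Hcd z Hz).
   replace (Rabs (g s) / (1 + 1/2)) with (2/3 * Rabs (g s)) in Hcd by field.
   replace (Rabs (g s) / (1 - 1/2)) with (2 * Rabs (g s)) in Hcd by field. auto. }
 clear Hcd.
 assert (Hu := Hcd' u ltac:(lra)).
 destruct (Rtotal_order (g s) 0) as [Hneg|[Hz|Hpos]].
 -
   assert (Hgu : g u < 0).
   { destruct (Rtotal_order (g u) 0) as [H|[H|H]]; auto.
     - rewrite H, Rabs_R0, Rabs_left in Hu by lra. lra.
     - destruct (IVT_interv g s u Hc Hsu Hneg H) as [z [Hz Hz0]].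
       assert (Hzz := Hcd' z Hz). rewrite Hz0, Rabs_R0, Rabs_left in Hzz by lra. lra. }
   rewrite Rabs_left in Hu by lra. rewrite Rabs_left in Hu by lra.
   unfold REL; split; intros; lra.
 - rewrite Hz, Rabs_R0 in Hu. rewrite Hz. assert (Rabs (g u) = 0) by lra.
   assert (g u = 0). { destruct (Req_dec (g u) 0); auto. apply Rabs_no_R0 in H0. lra. }
   rewrite H0. unfold REL; split; intros; lra.
 - assert (Hgu : g u > 0).
   { destruct (Rtotal_order (g u) 0) as [H|[H|H]]; auto.
     - destruct (IVT_interv (fun z => - g z) s u) as [z [Hz Hz0]]; auto.
       intros; apply (continuity_pt_opp g); auto. lra. lra.
       assert (Hzz := Hcd' z Hz). assert (g z = 0) by lra.
       rewrite H0, Rabs_R0, Rabs_right in Hzz by lra. lra.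
     - rewrite H, Rabs_R0, Rabs_right in Hu by lra. lra. }
   rewrite Rabs_right in Hu by lra. rewrite Rabs_right in Hu by lra.
   unfold REL; split; intros; lra.
Qed.

Lemma trig_nonneg a m x c rule tt i : triggers_generated a m x c rule tt -> (i < m)%nat ->
  forall k s, tt i k = Some s -> 0 <= s.
Proof. intros Htg Hi. destruct (Htg i Hi) as [H0 [HN HS]]. induction k; intros s Hs.
 - rewrite H0 in Hs. inversion Hs. lra.
 - destruct (tt i k) as [s0|] eqn:E.
   + assert (Hn := HS k s0 E). rewrite Hs in Hn. simpl in Hn. destruct Hn as [Hn _].
     specialize (IHk s0 eq_refl). lra.
   + rewrite (HN k E) in Hs. discriminate. Qed.

Lemma search (P : nat -> Prop) : P O -> forall K, ~ P K -> exists k, P k /\ ~ P (S k).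
Proof. intros H0 K. induction K; intros HK. contradiction.
 destruct (classic (P K)). exists K; auto. apply IHK; auto. Qed.

Lemma cont_q a m x i t : (i<m)%nat -> (forall k, (k<m)%nat -> continuity_pt (x k) t) ->
  continuity_pt (q a m x i) t.
Proof. intros Hi H. apply continuity_pt_ext with (Qf a m x i). intros; rewrite q_Qf; auto.
 apply cont_Qf; auto. Qed.

Lemma system_good a m x tt rule : triggers_generated a m x (1/2) rule tt -> non_zeno m tt ->
  solves_S a m x tt -> good a m x.
Proof.
 intros Htg Hnz [Hc Hd]. split; auto.
 intros j t Hj Ht.
 destruct (Htg j Hj) as [H0 [HN HS]].
 destruct (Hnz j t Hj) as [K HK].
 destruct (search (fun k => exists s, tt j k = Some s /\ s < t)) with (K := K) as [k [[s [Hs Hst]] Hnot]].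
 - exists 0. split; auto.
 - intros [s [Hs Hst]]. destruct HK as [HK|[s' [HK Hlt]]]; rewrite HK in Hs; inversion Hs; subst. lra.
 - assert (Hs0 := trig_nonneg a m x (1/2) rule tt j Htg Hj k s Hs).
   exists s, (q a m x j s). split. lra.
   intros u Hu.
   assert (Hnt := HS k s Hs).
   assert (Hmatch : match tt j (S k) with Some s' => u < s' | None => True end /\
     (forall z, s <= z <= u -> (if rule j then cond1 a m x (1/2) j s z else cond2 a m x (1/2) j s z))).
   { destruct (tt j (S k)) as [s'|] eqn:E.
     - assert (t <= s') by (apply Rnot_lt_le; intro; apply Hnot; eauto).
       simpl in Hnt. destruct Hnt as [_ [Hc1 _]]. split. lra. intros z Hz; apply Hc1; lra.
     - simpl in Hnt. split; auto. intros z Hz; apply Hnt; lra. }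
   destruct Hmatch as [Hm Hcond]. split.
   + apply (Hd j k s u Hj Hs); auto. lra.
   + rewrite <- q_Qf by auto.
     destruct (rule j).
     * apply rel_cond1. apply (Hcond u). lra.
     * apply (rel_cond2 (q a m x j) s u). lra.
       intros z Hz. apply cont_q; auto. intros; apply Hc; auto; lra.
       intros z Hz. apply (Hcond z Hz).
Qed.

Theorem corollary2 (m : nat) (a : nat -> nat -> R)
  (Hnonneg : forall i j, (i < m)%nat -> (j < m)%nat -> 0 <= a i j)
  (Hdiag : forall i, (i < m)%nat -> a i i = 0)
  (Hsc : strongly_connected a m) :
  exists c, 0 < c < 1 /\
    forall (x : nat -> R -> R) (tt : nat -> nat -> option R) (rule : nat -> bool),
      triggers_generated a m x c rule tt ->
      non_zeno m tt ->
      solves_S a m x tt ->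
      consensus m x.
Proof.
  exists (1/2). split. lra.
  intros x tt rule Htg Hnz HS.
  apply consensus_of_good with a; auto.
  eapply system_good; eauto.
Qed.
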